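(* Let $Z$ be a real-valued random variable such that for some $\bar\delta,\bar\rho>0$ we have $\mathbb{P}(|Z|<x)\le\bar\rho x$ for all $x\le\bar\delta$. Let $q>2$ and let $(Z_\ell)_{\ell\ge 0}$ be real-valued random variables (approximations of $Z$), defined on the same probability space as $Z$, with $\mathbb{E}[|Z_\ell-Z|^q]<\infty$. For each $\ell$, let $Z_\ell^{(0)},Z_\ell^{(1)}$ be two samples of $Z_\ell$, i.e. random variables such that $(Z_\ell^{(i)},Z)$ has the same joint distribution as $(Z_\ell,Z)$ for $i=0,1$. Then for all $2\le p\le q$ there is $b_0>0$, independent of $\ell$, such that \[ \mathbb{E}\left[\left|\max\left\{\frac{Z_\ell^{(0)}+Z_\ell^{(1)}}{2},0\right\}-\frac12\sum_{i=0}^1\max\{Z_\ell^{(i)},0\}\right|^p\right]\le b_0\,\mathbb{E}\left[|Z_\ell-Z|^q\right]^{(p+1)/(q+1)}. \] *)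

(* Defs.v *)
From HB Require Import structures.
From mathcomp Require Import all_boot all_order all_algebra.
From mathcomp Require Import all_classical all_reals all_analysis.
Set Implicit Arguments. Unset Strict Implicit. Unset Printing Implicit Defensive.
Import Order.TTheory GRing.Theory Num.Theory.
Local Open Scope classical_set_scope.
Local Open Scope ring_scope.

Definition same_joint_law d (T : measurableType d) (R : realType)
    (P : probability T R) (X Y Z : T -> R) : Prop :=
  forall A : set (R * R)%type, measurable A ->
    P ((fun t => (X t, Z t)) @^-1` A) = P ((fun t => (Y t, Z t)) @^-1` A).

(* Main.v *)
Require Import Defs.
From HB Require Import structures.
From mathcomp Require Import all_boot all_order all_algebra.
From mathcomp Require Import all_classical all_reals all_analysis.
From mathcomp Require Import measurable_realfun.
From mathcomp Require Import ring lra.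
Import Order.TTheory GRing.Theory Num.Theory.
Local Open Scope classical_set_scope.
Local Open Scope ring_scope.

Lemma W_cases (R : realType) (a b z : R) :
  let W0 := Num.max ((a + b) / 2) 0 - (Num.max a 0 + Num.max b 0) / 2 in
  W0 = 0 \/
  (- `|a - z| <= W0 /\ W0 <= `|a - z| /\ - `|a - z| <= z /\ z <= `|a - z|) \/
  (- `|b - z| <= W0 /\ W0 <= `|b - z| /\ - `|b - z| <= z /\ z <= `|b - z|).
Proof.
move=> W0; rewrite /W0.
case: (leP a 0) => ha; case: (leP b 0) => hb; case: (leP ((a+b)/2) 0) => hab;
(case: (lerP 0 (a - z)) => haz; [rewrite (ger0_norm haz)| rewrite (ltr0_norm haz)]);
(case: (lerP 0 (b - z)) => hbz; [rewrite (ger0_norm hbz)| rewrite (ltr0_norm hbz)]); lra.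
Qed.

Lemma single (R : realType) (w v z x p q : R) : 0 < x -> 0 <= p -> p <= q ->
  0 <= w -> w <= v -> `|z| <= v ->
  w `^ p <= v `^ q * x `^ (p - q) + x `^ p * ((`|z| < x)%R)%:R.
Proof.
move=> x0 p0 pq w0 wv zv.
have v0 : 0 <= v by apply: le_trans wv.
have h1 : w `^ p <= v `^ p by apply: ge0_ler_powR => //; rewrite nnegrE.
case: (leP x v) => xv.
- have vn0 : v != 0 by rewrite gt_eqF // (lt_le_trans x0 xv).
  have xn0 : x != 0 by rewrite gt_eqF.
  have e1 : v `^ q = v `^ p * v `^ (q - p).
    by rewrite -powRD ?vn0 ?implybT //; congr (_ `^ _); ring.
  have e2 : x `^ (q - p) * x `^ (p - q) = 1.
    by rewrite -powRD ?xn0 ?implybT // (_ : q - p + (p - q) = 0) ?powRr0 //; ring.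
  have h2 : x `^ (q - p) <= v `^ (q - p).
    by apply: ge0_ler_powR => //; rewrite ?subr_ge0 ?nnegrE // ltW.
  apply: (le_trans h1).
  rewrite e1 -[X in X <= _]addr0; apply: lerD; last first.
    by apply: mulr_ge0 => //; exact: powR_ge0.
  rewrite -mulrA -[X in X <= _]mulr1 ler_wpM2l //; first exact: powR_ge0.
  rewrite -e2 ler_wpM2r //; exact: powR_ge0.
- rewrite (le_lt_trans zv xv) mulr1.
  apply: le_trans (_ : x `^ p <= _).
    apply: le_trans h1 _; apply: ge0_ler_powR => //; rewrite ?nnegrE ?ltW //.
  rewrite lerDr; apply: mulr_ge0; exact: powR_ge0.
Qed.
Lemma transfer d (T : measurableType d) (R : realType) (P : probability T R)
  (X Y Z : T -> R) (mX : measurable_fun setT X) (mY : measurable_fun setT Y)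
  (mZ : measurable_fun setT Z) (h : same_joint_law P X Y Z)
  (g : (R * R)%type -> R) (mg : measurable_fun setT g) (g0 : forall y, 0 <= g y) :
  (\int[P]_t (g (X t, Z t))%:E = \int[P]_t (g (Y t, Z t))%:E)%E.
Proof.
have mXZ : measurable_fun setT (fun t => (X t, Z t)) by exact: measurable_fun_pair.
have mYZ : measurable_fun setT (fun t => (Y t, Z t)) by exact: measurable_fun_pair.
have mge : measurable_fun setT (EFin \o g) by exact/measurable_EFinP.
have := @ge0_integral_pushforward _ _ _ _ R _ mXZ P setT (EFin \o g) measurableT mge (fun y _ => g0 y : (0 <= (g y)%:E)%E).
have := @ge0_integral_pushforward _ _ _ _ R _ mYZ P setT (EFin \o g) measurableT mge (fun y _ => g0 y : (0 <= (g y)%:E)%E).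
rewrite !preimage_setT /= => <- <-.
apply: eq_measure_integral => A mA _.
exact: h.
Qed.

Lemma key d (T : measurableType d) (R : realType) (P : probability T R)
  (Z Zl Z0 Z1 : {RV P >-> R}) (delta rho : R) (hdelta : 0 < delta) (hrho : 0 < rho)
  (hZ : forall x : R, 0 < x -> x <= delta ->
        (P [set t | (`|Z t| < x)%R] <= (rho * x)%:E)%E)
  (q p : R) (p0 : 0 < p) (hpq : p <= q)
  (hfin : (\int[P]_t ((`|Zl t - Z t| `^ q)%R%:E) < +oo)%E)
  (h0 : same_joint_law P Z0 Zl Z) (h1 : same_joint_law P Z1 Zl Z)
  (x : R) (x0 : 0 < x) :
  (\int[P]_t ((`| Num.max ((Z0 t + Z1 t) / 2) 0
                     - (Num.max (Z0 t) 0 + Num.max (Z1 t) 0) / 2 | `^ p)%R%:E)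
   <= (2 * (fine (\int[P]_t ((`|Zl t - Z t| `^ q)%R%:E)) * x `^ (p - q)
            + (rho + delta^-1) * x `^ (p + 1)))%:E)%E.
Proof.
set E := fine _.
set A := [set t | `|Z t| < x].
have mZ := measurable_funPT Z.
have mnZ : measurable_fun setT (fun t => `|Z t|).
  exact: (@measurableT_comp _ _ _ _ _ _ _ _ Z (@normr_measurable R setT) mZ).
have mA : measurable A.
  have := measurable_fun_ltr mnZ (measurable_cst x) measurableT (Y:=[set true]) I.
  by rewrite setTI.
have mDq : forall c : {RV P >-> R}, measurable_fun setT (fun t => `|c t - Z t| `^ q).
  move=> c.
  exact: (@measurableT_comp _ _ _ _ _ _ (fun y : R => y `^ q) _ (fun t => `|c t - Z t|) (measurable_powR q) (@measurableT_comp _ _ _ _ _ _ _ _ (fun t => c t - Z t) (@normr_measurable R setT) (measurable_funB (measurable_funPT c) mZ))).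
pose G (c : T -> R) t := `|c t - Z t| `^ q * x `^ (p - q) + x `^ p * \1_A t.
have mG : forall c : {RV P >-> R}, measurable_fun setT (G c).
  move=> c; rewrite /G; apply: measurable_funD; apply: measurable_funM.
  - exact: mDq.
  - exact: measurable_cst.
  - exact: measurable_cst.
  - exact: measurable_indic.
have G0 : forall c t, 0 <= G c t.
  move=> c t; apply: addr_ge0; apply: mulr_ge0; rewrite ?powR_ge0 //.
have hA : forall s, \1_A s = ((`|Z s| < x)%R)%:R :> R.
  move=> s; rewrite indicE; case: (boolP (`|Z s| < x)) => h.
    by rewrite mem_set.
  by rewrite memNset //; apply/negP.
have mZ0 := measurable_funPT Z0.
have mZ1 := measurable_funPT Z1.
have mF : measurable_fun setT (fun t => `| Num.max ((Z0 t + Z1 t) / 2) 0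
                     - (Num.max (Z0 t) 0 + Num.max (Z1 t) 0) / 2 | `^ p).
  apply: (@measurableT_comp _ _ _ _ _ _ (fun y : R => y `^ p) _ _ (measurable_powR p)).
  apply: (@measurableT_comp _ _ _ _ _ _ _ _ _ (@normr_measurable R setT)).
  apply: measurable_funB.
    apply: measurable_maxr; last exact: measurable_cst.
    exact: measurable_funM (measurable_funD mZ0 mZ1) (measurable_cst _).
  apply: measurable_funM; last exact: measurable_cst.
  by apply: measurable_funD; apply: measurable_maxr => //; exact: measurable_cst.
have pt : forall t, `| Num.max ((Z0 t + Z1 t) / 2) 0
                     - (Num.max (Z0 t) 0 + Num.max (Z1 t) 0) / 2 | `^ p
                  <= G Z0 t + G Z1 t.
  move=> t; have := W_cases R (Z0 t) (Z1 t) (Z t); rewrite /=.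
  case => [->|[[k1 [k2 [k3 k4]]]|[k1 [k2 [k3 k4]]]]].
  - rewrite normr0 powR0 ?gt_eqF //; exact: addr_ge0.
  - apply: (@le_trans _ _ (G Z0 t)); last by rewrite lerDl.
    rewrite /G hA; apply: single => //; first exact: ltW.
      by rewrite ler_norml k1 k2.
    by rewrite ler_norml k3 k4.
  - apply: (@le_trans _ _ (G Z1 t)); last by rewrite lerDr.
    rewrite /G hA; apply: single => //; first exact: ltW.
      by rewrite ler_norml k1 k2.
    by rewrite ler_norml k3 k4.
have Dq0 : forall (c : T -> R) t, 0 <= `|c t - Z t| `^ q by move=> c t; exact: powR_ge0.
have hE : (\int[P]_t ((`|Zl t - Z t| `^ q)%R%:E) = E%:E)%E.
  rewrite /E fineK // ge0_fin_numE //.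
  by apply: integral_ge0 => t _; rewrite lee_fin.
have mg : measurable_fun setT (fun y : (R * R)%type => `|y.1 - y.2| `^ q).
  apply: (@measurableT_comp _ _ _ _ _ _ (fun y : R => y `^ q) _ _ (measurable_powR q)).
  apply: (@measurableT_comp _ _ _ _ _ _ _ _ _ (@normr_measurable R setT)).
  exact: measurable_funB measurable_fst measurable_snd.
have eDq : forall c : {RV P >-> R}, same_joint_law P c Zl Z ->
    (\int[P]_t ((`|c t - Z t| `^ q)%R%:E) = E%:E)%E.
  move=> c hc; rewrite -hE.
  have := @transfer _ _ R P c Zl Z (measurable_funPT c) (measurable_funPT Zl) mZ hc
    (fun y : (R * R)%type => `|y.1 - y.2| `^ q) mg (fun y => powR_ge0 _ _).
  by move=> /= ->.
have eG : forall c : {RV P >-> R}, same_joint_law P c Zl Z ->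
    (\int[P]_t ((G c t)%:E))%E = ((E * x `^ (p - q))%:E + (x `^ p)%:E * P A)%E.
  move=> c hc.
  under eq_integral do rewrite /G EFinD.
  rewrite ge0_integralD //; first last.
  - by apply/measurable_EFinP; apply: measurable_funM => //; exact: measurable_indic.
  - by move=> t _; rewrite lee_fin; apply: mulr_ge0; rewrite ?powR_ge0 // indicE.
  - by apply/measurable_EFinP; apply: measurable_funM => //; exact: mDq.
  - by move=> t _; rewrite lee_fin; apply: mulr_ge0; rewrite ?powR_ge0.
  congr (_ + _)%E.
    under eq_integral do rewrite EFinM.
    rewrite ge0_integralZr ?eDq // ?lee_fin ?powR_ge0 //.
    by apply/measurable_EFinP; exact: mDq.
  under eq_integral do rewrite EFinM.
  rewrite ge0_integralZl_EFin ?integral_indic ?setIT // ?powR_ge0 //.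
  by apply/measurable_EFinP; exact: measurable_indic.
have PA : (P A <= ((rho + delta^-1) * x)%:E)%E.
  case: (leP x delta) => xd.
  - apply: le_trans (hZ x x0 xd) _; rewrite lee_fin mulrDl lerDl.
    by apply: mulr_ge0; [rewrite invr_ge0|]; exact: ltW.
  - apply: le_trans (probability_le1 P mA) _; rewrite lee_fin.
    have hd1 : delta^-1 * delta <= delta^-1 * x.
      by apply: ler_wpM2l; [rewrite invr_ge0; exact: ltW hdelta| exact: ltW xd].
    rewrite mulVf ?gt_eqF // in hd1.
    have : 0 < rho * x by apply: mulr_gt0.
    rewrite mulrDl; lra.
apply: (le_trans (@ge0_le_integral _ _ _ P setT measurableT _ (fun t => (G Z0 t + G Z1 t)%:E) _ _ _ _)).
- by move=> t _; rewrite lee_fin powR_ge0.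
- exact/measurable_EFinP.
- by apply/measurable_EFinP; exact: measurable_funD.
- by move=> t _; rewrite lee_fin.
under eq_integral do rewrite EFinD.
rewrite ge0_integralD //; first last.
- exact/measurable_EFinP.
- by move=> t _; rewrite lee_fin.
- exact/measurable_EFinP.
- by move=> t _; rewrite lee_fin.
rewrite (eG Z0 h0) (eG Z1 h1).
have hx : ((x `^ p)%:E * P A <= ((x `^ p) * ((rho + delta^-1) * x))%:E)%E.
  by rewrite EFinM; apply: lee_wpmul2l => //; rewrite lee_fin powR_ge0.
apply: le_trans (leeD (leeD2l _ hx) (leeD2l _ hx)) _.
rewrite -!EFinD lee_fin.
have -> : x `^ (p + 1) = x `^ p * x.
  rewrite powRD; first by congr (_ * _); apply: powRr1; exact: ltW x0.
  by rewrite (gt_eqF x0) implybT.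
lra.
Qed.


Theorem lemma2p1 (d : measure_display) (T : measurableType d) (R : realType)
    (P : probability T R) (Z : {RV P >-> R})
    (delta rho : R) (hdelta : 0 < delta) (hrho : 0 < rho)
    (hZ : forall x : R, 0 < x -> x <= delta ->
        (P [set t | (`|Z t| < x)%R] <= (rho * x)%:E)%E)
    (q : R) (hq : 2 < q)
    (Zl : nat -> {RV P >-> R})
    (hfin : forall l : nat,
        (\int[P]_t ((`|Zl l t - Z t| `^ q)%R%:E) < +oo)%E)
    (Z0 Z1 : nat -> {RV P >-> R})
    (hZ0 : forall l : nat, same_joint_law P (Z0 l) (Zl l) Z)
    (hZ1 : forall l : nat, same_joint_law P (Z1 l) (Zl l) Z) :
  forall p : R, 2 <= p -> p <= q ->
  exists b0 : R, 0 < b0 /\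
    forall l : nat,
      (\int[P]_t ((`| Num.max ((Z0 l t + Z1 l t) / 2) 0
                     - (Num.max (Z0 l t) 0 + Num.max (Z1 l t) 0) / 2 | `^ p)%R%:E)
       <= (b0 * (fine (\int[P]_t ((`|Zl l t - Z t| `^ q)%R%:E)))
                  `^ ((p + 1) / (q + 1)))%R%:E)%E.
Proof.
move=> p p2 pq.
have p0 : 0 < p by apply: lt_le_trans p2.
have q10 : 0 < q + 1 by lra.
have K0 : 0 < rho + delta^-1 by apply: addr_gt0 => //; rewrite invr_gt0.
set K := rho + delta^-1 in K0 *.
set C := 2 * (1 + K).
have C0 : 0 < C by rewrite /C; lra.
set r := (p + 1) / (q + 1).
have r0 : 0 < r by rewrite /r; apply: divr_gt0 => //; lra.
exists C; split => //.
move=> l.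
set E := fine _.
have E0 : 0 <= E by rewrite /E fine_ge0 // integral_ge0 // => t _; rewrite lee_fin powR_ge0.
have hk := @key _ _ R P Z (Zl l) (Z0 l) (Z1 l) delta rho hdelta hrho hZ q p p0 pq
   (hfin l) (hZ0 l) (hZ1 l).
rewrite -/E -/K in hk.
move: E0; rewrite le_eqVlt => /orP[/eqP Ez | Epos].
- rewrite -Ez powR0 ?gt_eqF // mulr0.
  set I := (\int[P]_t _)%E.
  have I0 : (0 <= I)%E by apply: integral_ge0 => t _; rewrite lee_fin powR_ge0.
  have hI : forall x, 0 < x -> (I <= (2 * (K * x `^ (p + 1)))%:E)%E.
    by move=> x x0; have := hk x x0; rewrite -Ez mul0r add0r.
  have Ifin : I \is a fin_num.
    by rewrite ge0_fin_numE // (le_lt_trans (hI 1 ltr01)) // ltry.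
  rewrite -(fineK Ifin) lee_fin leNgt; apply/negP => ypos.
  set y := fine I in ypos.
  set x := Num.min 1 (y / (4 * K)).
  have x0 : 0 < x by rewrite lt_min ltr01 /=; apply: divr_gt0 => //; lra.
  have x1 : x <= 1 by rewrite ge_min lexx.
  have xy : x <= y / (4 * K) by rewrite ge_min lexx orbT.
  have xp : x `^ (p + 1) <= x.
    rewrite powRD ?(gt_eqF x0) ?implybT // (powRr1 (ltW x0)).
    rewrite -[X in _ <= X]mul1r; apply: ler_wpM2r; first exact: ltW x0.
    rewrite -[X in _ <= X](congr1 (fun f => f p) (@powR1 R)); apply: ge0_ler_powR; rewrite ?nnegrE.
    - exact: ltW p0.
    - exact: ltW x0.
    - by [].
    - exact: x1.
  have := hI x x0; rewrite -(fineK Ifin) lee_fin -/y => hy.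
  have h4 : 4 * K * x <= y.
    by rewrite mulrC -ler_pdivlMr ?mulr_gt0 //; lra.
  have : K * x `^ (p + 1) <= K * x by apply: ler_wpM2l; [exact: ltW K0|].
  lra.
- have x0 : 0 < E `^ (q + 1)^-1 by apply: powR_gt0.
  apply: le_trans (hk _ x0) _; rewrite lee_fin.
  have f1 : E * (E `^ (q + 1)^-1) `^ (p - q) = E `^ r.
    rewrite -powRrM -[X in X * _](powRr1 (ltW Epos)) -powRD; last first.
      by rewrite (gt_eqF Epos) implybT.
    by congr (_ `^ _); rewrite /r; field; rewrite gt_eqF.
  have f2 : (E `^ (q + 1)^-1) `^ (p + 1) = E `^ r by rewrite -powRrM /r mulrC.
  rewrite f1 f2 /C; lra.
Qed.
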